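(* Let $K$ be a field, $m\ge2$, $d_1,\ldots,d_m$ positive integers, $S=K[x_1,\ldots,x_m,y_1,\ldots,y_m]$, $f_{ij}=x_i^{d_i}y_j^{d_j}-x_j^{d_j}y_i^{d_i}$ for $1\le i<j\le m$, $I_2(D)=(f_{ij}:1\le i<j\le m)$ (the ideal of $2$-minors of $\begin{pmatrix}x_1^{d_1}&\cdots&x_m^{d_m}\\ y_1^{d_1}&\cdots&y_m^{d_m}\end{pmatrix}$), and $J_L=(f_{12},f_{13},\ldots,f_{1m})$. Then $J_L=I_2(D)\cap(x_1^{d_1},y_1^{d_1})$. *)

(* Defs.v *)
From HB Require Import structures.
From mathcomp Require Import all_boot all_order all_algebra.
From mathcomp Require Import mpoly.
Set Implicit Arguments. Unset Strict Implicit. Unset Printing Implicit Defensive.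
Import GRing.Theory.
Local Open Scope ring_scope.

(* S = K[x_1..x_m, y_1..y_m] is {mpoly K[m + m]}; x_i = 'X_(lshift m i),
   y_i = 'X_(rshift m i), indices 0-based. *)
Definition xv (K : fieldType) (m : nat) (i : 'I_m) : {mpoly K[m + m]} :=
  'X_(lshift m i).
Definition yv (K : fieldType) (m : nat) (i : 'I_m) : {mpoly K[m + m]} :=
  'X_(rshift m i).

Definition fmin (K : fieldType) (m : nat) (d : 'I_m -> nat) (i j : 'I_m)
  : {mpoly K[m + m]} :=
  xv K i ^+ d i * yv K j ^+ d j - xv K j ^+ d j * yv K i ^+ d i.

Definition in_ideal_gen (R : comRingType) (I : finType) (P : pred I)
  (g : I -> R) (p : R) : Prop :=
  exists c : I -> R, p = \sum_(k | P k) c k * g k.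

Definition I2D (K : fieldType) (m : nat) (d : 'I_m -> nat) (p : {mpoly K[m + m]}) :=
  in_ideal_gen (fun ij : 'I_m * 'I_m => (ij.1 < ij.2)%N)
    (fun ij => fmin K d ij.1 ij.2) p.

Definition JL (K : fieldType) (m : nat) (d : 'I_m -> nat) (p : {mpoly K[m + m]}) :=
  in_ideal_gen (fun ij : 'I_m * 'I_m => (val ij.1 == 0%N) && (ij.1 < ij.2)%N)
    (fun ij => fmin K d ij.1 ij.2) p.

Definition M1 (K : fieldType) (m : nat) (d : 'I_m -> nat) (p : {mpoly K[m + m]}) :=
  in_ideal_gen (fun bi : bool * 'I_m => val bi.2 == 0%N)
    (fun bi => if bi.1 then xv K bi.2 ^+ d bi.2 else yv K bi.2 ^+ d bi.2) p.

(* Main.v *)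
Require Import Defs.
From HB Require Import structures.
From mathcomp Require Import all_boot all_order all_algebra.
From mathcomp Require Import mpoly.
From mathcomp Require Import ring.
Set Implicit Arguments. Unset Strict Implicit. Unset Printing Implicit Defensive.
Import GRing.Theory.
Local Open Scope ring_scope.

Section Trunc.
Variables (K : fieldType) (n : nat) (a b : 'I_n) (e : nat).

Definition small (mu : 'X_{1..n}) := ((mu a < e) && (mu b < e))%N.
Definition T (p : {mpoly K[n]}) : {mpoly K[n]} :=
  \sum_(mu <- msupp p | small mu) p@_mu *: 'X_[mu].

Lemma T_coef p k : (T p)@_k = if small k then p@_k else 0.
Proof.
rewrite /T raddf_sum /=.
under eq_bigr => mu _ do rewrite mcoeffZ mcoeffX.
rewrite big_mkcond /=.
case: (boolP (k \in msupp p)) => hk.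
  rewrite (bigD1_seq k) ?msupp_uniq //= eqxx.
  rewrite big1 ?addr0; first by case: (small k); rewrite ?mulr1.
  by move=> mu /negbTE ->; rewrite mulr0; case: (small mu).
rewrite big_seq big1.
  by rewrite -mcoeff_eq0 in hk; rewrite (eqP hk); case: (small k).
move=> mu hmu; case: eqP => [E|]; last by rewrite mulr0; case: (small mu).
by rewrite -E hmu in hk.
Qed.

Lemma TD p q : T (p + q) = T p + T q.
Proof. apply/mpolyP => k; rewrite mcoeffD !T_coef mcoeffD; case: (small k) => //; by rewrite addr0. Qed.
Lemma T0 : T 0 = 0.
Proof. apply/mpolyP => k; rewrite T_coef mcoeff0; by case: (small k). Qed.
Lemma TN p : T (- p) = - T p.
Proof. apply/mpolyP => k; rewrite mcoeffN !T_coef mcoeffN; case: (small k) => //; by rewrite oppr0. Qed.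
Lemma TB p q : T (p - q) = T p - T q.
Proof. by rewrite TD TN. Qed.
Lemma TZ c p : T (c *: p) = c *: T p.
Proof. apply/mpolyP => k; rewrite mcoeffZ !T_coef mcoeffZ; case: (small k) => //; by rewrite mulr0. Qed.
Lemma Tsum I (r : seq I) (P : pred I) F : T (\sum_(i <- r | P i) F i) = \sum_(i <- r | P i) T (F i).
Proof. exact: (big_morph T TD T0). Qed.
Lemma TX mu : T 'X_[mu] = if small mu then 'X_[mu] else 0.
Proof.
apply/mpolyP => k; rewrite T_coef mcoeffX.
case: (eqVneq mu k) => [<-|ne].
  by case: (small mu); rewrite ?mcoeffX ?eqxx ?mcoeff0.
by case: (small k); case: (small mu); rewrite ?mcoeffX ?mcoeff0 ?(negbTE ne).
Qed.

Lemma mulX_dec (c : {mpoly K[n]}) nu : c * 'X_[nu] = \sum_(mu <- msupp c) c@_mu *: 'X_[mu + nu].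
Proof.
rewrite {1}(mpolyE c) mulr_suml; apply: eq_bigr => mu _.
by rewrite -scalerAl -mpolyXD.
Qed.

Definition Free (f : {mpoly K[n]}) := forall c, T (c * f) = T c * f.

Lemma FreeX k : k != a -> k != b -> Free 'X_k.
Proof.
move=> ha hb c; rewrite mulX_dec Tsum [in RHS](mpolyE c) Tsum mulr_suml.
apply: eq_bigr => mu _; rewrite !TZ !TX -scalerAl.
have -> : small (mu + U_(k)) = small mu.
  by rewrite /small !mnmDE !mnm1E (negbTE ha) (negbTE hb) !addn0.
by case: (small mu); rewrite ?mpolyXD ?mul0r.
Qed.

Lemma Free1 : Free 1.
Proof. by move=> c; rewrite !mulr1. Qed.
Lemma FreeM f g : Free f -> Free g -> Free (f * g).
Proof. by move=> hf hg c; rewrite mulrA hg hf mulrA. Qed.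
Lemma FreeB f g : Free f -> Free g -> Free (f - g).
Proof. by move=> hf hg c; rewrite mulrBr TB hf hg mulrBr. Qed.
Lemma FreeXn f i : Free f -> Free (f ^+ i).
Proof. move=> hf; elim: i => [|i ih]; first by rewrite expr0; exact: Free1. by rewrite exprS; apply: FreeM. Qed.

Lemma T_kill (c : {mpoly K[n]}) (nu : 'X_{1..n}) : ((e <= nu a) || (e <= nu b))%N -> T (c * 'X_[nu]) = 0.
Proof.
move=> h; rewrite mulX_dec Tsum big1 // => mu _; rewrite TZ TX.
have -> : small (mu + nu) = false.
  apply/negbTE; rewrite /small !mnmDE negb_and -!leqNgt.
  by case/orP: h => h; apply/orP; [left|right]; exact: leq_trans h (leq_addl _ _).
by rewrite scaler0.
Qed.

Lemma Tlow (c : {mpoly K[n]}) : exists u v, c - T c = u * 'X_a ^+ e + v * 'X_b ^+ e.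
Proof.
pose Q (p : {mpoly K[n]}) := exists u v : {mpoly K[n]}, p = u * 'X_a ^+ e + v * 'X_b ^+ e.
have Q0 : Q 0 by exists 0, 0; rewrite !mul0r addr0.
have QD : forall p q, Q p -> Q q -> Q (p + q).
  move=> p q [u [v ->]] [u' [v' ->]]; exists (u + u'), (v + v').
  by rewrite !mulrDl addrACA.
rewrite [X in X - _](mpolyE c) [X in T X](mpolyE c) Tsum -sumrB; apply: (big_ind Q) => // mu _.
rewrite TZ TX -scalerBr; case: (boolP (small mu)) => hs.
  by rewrite subrr scaler0.
rewrite subr0; move: hs; rewrite /small negb_and -!leqNgt => /orP[] h.
  exists (c@_mu *: 'X_[mu - U_(a) *+ e]), 0; rewrite mul0r addr0 -scalerAl.
  rewrite mpolyXn -mpolyXD; congr (_ *: 'X_[_]); apply/mnmP => i.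
  rewrite mnmDE mnmBE mulmnE mnm1E; case: eqP => [<-|_]; last by rewrite mul0n subn0 addn0.
  by rewrite mul1n subnK.
exists 0, (c@_mu *: 'X_[mu - U_(b) *+ e]); rewrite mul0r add0r -scalerAl.
rewrite mpolyXn -mpolyXD; congr (_ *: 'X_[_]); apply/mnmP => i.
rewrite mnmDE mnmBE mulmnE mnm1E; case: eqP => [<-|_]; last by rewrite mul0n subn0 addn0.
by rewrite mul1n subnK.
Qed.
End Trunc.

Section Ideal.
Variables (R : comRingType) (I : finType) (P : pred I) (g : I -> R).
Lemma ig0 : in_ideal_gen P g 0.
Proof. by exists (fun _ => 0); rewrite big1 // => k _; rewrite mul0r. Qed.
Lemma igD p q : in_ideal_gen P g p -> in_ideal_gen P g q -> in_ideal_gen P g (p + q).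
Proof. by move=> [c ->] [c' ->]; exists (fun k => c k + c' k); rewrite -big_split; apply: eq_bigr => k _; rewrite mulrDl. Qed.
Lemma igM r p : in_ideal_gen P g p -> in_ideal_gen P g (r * p).
Proof. by move=> [c ->]; exists (fun k => r * c k); rewrite mulr_sumr; apply: eq_bigr => k _; rewrite mulrA. Qed.
Lemma igB p q : in_ideal_gen P g p -> in_ideal_gen P g q -> in_ideal_gen P g (p - q).
Proof. move=> hp hq; apply: igD => //; rewrite -mulN1r; exact: igM. Qed.
Lemma igG k : P k -> in_ideal_gen P g (g k).
Proof.
move=> hk; exists (fun j => (j == k)%:R); rewrite (bigD1 k) //= eqxx mul1r big1 ?addr0 //.
by move=> j /andP[_ /negbTE ->]; rewrite mul0r.
Qed.
Lemma igsum (J : Type) (r : seq J) (Q : pred J) F :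
  (forall j, Q j -> in_ideal_gen P g (F j)) -> in_ideal_gen P g (\sum_(j <- r | Q j) F j).
Proof. by move=> h; apply: big_ind => //; [exact: ig0 | exact: igD]. Qed.
End Ideal.

Theorem proposition4p13 (K : fieldType) (m : nat) (hm : (2 <= m)%N)
  (d : 'I_m -> nat) (hd : forall i, (0 < d i)%N) (p : {mpoly K[m + m]}) :
  JL d p <-> (I2D d p /\ M1 d p).
Proof.
have m0 : (0 < m)%N by exact: leq_trans hm.
pose i0 : 'I_m := Ordinal m0.
have hi0 : forall i : 'I_m, val i == 0%N -> i = i0 by move=> i /eqP h; apply: val_inj.
have M1gen : forall j : 'I_m, M1 d (fmin K d i0 j).
  move=> j; rewrite /fmin.
  have hx : M1 d (xv K i0 ^+ d i0) by exact: (@igG _ _ (fun bi : bool * 'I_m => val bi.2 == 0%N) (fun bi : bool * 'I_m =>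
     if bi.1 then xv K bi.2 ^+ d bi.2 else yv K bi.2 ^+ d bi.2) (true, i0)).
  have hy : M1 d (yv K i0 ^+ d i0) by exact: (@igG _ _ (fun bi : bool * 'I_m => val bi.2 == 0%N) (fun bi : bool * 'I_m =>
     if bi.1 then xv K bi.2 ^+ d bi.2 else yv K bi.2 ^+ d bi.2) (false, i0)).
  by rewrite /M1; apply: igB; [rewrite mulrC|]; apply: igM.
have JLsub : forall q : {mpoly K[m + m]}, JL d q -> I2D d q /\ M1 d q.
  move=> q [c ->]; split; apply: igsum => k /andP[h0 hlt].
    by apply: igM; exact: (@igG _ _ (fun ij : 'I_m * 'I_m => (ij.1 < ij.2)%N)
       (fun ij => fmin K d ij.1 ij.2) k hlt).
  by apply: igM; rewrite (hi0 _ h0); apply: M1gen.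
split; first exact: JLsub.
move=> [[c hc] hM].
pose a := lshift m i0; pose b := rshift m i0; pose e := d i0.
have TM1 : forall q : {mpoly K[m + m]}, M1 d q -> T a b e q = 0.
  move=> q [c' ->]; rewrite Tsum big1 // => [[bb i]] /= /hi0 ->.
  by rewrite /xv /yv; case: bb; rewrite mpolyXn T_kill //= /a /b /e !mulmnE !mnm1E eqxx mul1n leqnn ?orbT.
have JLgen : forall j : 'I_m, (0 < val j)%N -> JL d (fmin K d i0 j).
  move=> j hj; exact: (@igG _ _ (fun ij : 'I_m * 'I_m => (val ij.1 == 0%N) && (ij.1 < ij.2)%N)
       (fun ij => fmin K d ij.1 ij.2) (i0, j) hj).
have -> : p = p - T a b e p by rewrite TM1 // subr0.
rewrite {1}hc hc Tsum -sumrB; apply: igsum => k hlt.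
case: (boolP (val k.1 == 0%N)) => h0.
  have E := hi0 _ h0.
  have hJ : JL d (c k * fmin K d k.1 k.2).
    by apply: igM; rewrite E; apply: JLgen; move: hlt; rewrite (eqP h0).
  by rewrite TM1 ?subr0 //; case: (JLsub _ hJ).
have h1 : (0 < val k.1)%N by rewrite lt0n.
have h2 : (0 < val k.2)%N by exact: ltn_trans hlt.
have nl : forall i : 'I_m, (0 < val i)%N -> lshift m i != a.
  by move=> i hi; rewrite /a eq_lshift; apply/eqP => E; rewrite E /= in hi.
have nr : forall i : 'I_m, (0 < val i)%N -> rshift m i != b.
  by move=> i hi; rewrite /b eq_rshift; apply/eqP => E; rewrite E /= in hi.
have hF : Free a b e (fmin K d k.1 k.2).
  rewrite /fmin /xv /yv; apply: FreeB; apply: FreeM; apply: FreeXn; apply: FreeX;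
  rewrite ?eq_lrshift ?eq_rlshift ?nl ?nr //.
rewrite hF -mulrBl; have [u [v ->]] := Tlow a b e (c k).
rewrite mulrDl -!mulrA; apply: igD; apply: igM.
  have -> : 'X_a ^+ e * fmin K d k.1 k.2
     = xv K k.1 ^+ d k.1 * fmin K d i0 k.2 - xv K k.2 ^+ d k.2 * fmin K d i0 k.1.
    by rewrite /fmin /a /e /xv; ring.
  by apply: igB; apply: igM; apply: JLgen.
have -> : 'X_b ^+ e * fmin K d k.1 k.2
   = yv K k.1 ^+ d k.1 * fmin K d i0 k.2 - yv K k.2 ^+ d k.2 * fmin K d i0 k.1.
  by rewrite /fmin /b /e /yv; ring.
by apply: igB; apply: igM; apply: JLgen.
Qed.
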